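(* Let $G$ be the abelian group of sequences $(\alpha_i)_{i\in\mathbb N}\in\{-1,1\}^{\mathbb N}$ which are eventually equal to $1$ (coordinatewise multiplication). Let $G$ act on $c_0$ by $u(g)(\sum_ix_ie_i)=\sum_i\alpha_ix_ie_i$, on $\mathbb R$ trivially ($v(g)=\mathrm{Id}$), and on $c_0\oplus\mathbb R$ by $$\lambda(g)(x,y)=\Big(u(g)x+y\sum_{i:\alpha_i=-1}e_i,\;y\Big),\qquad g=(\alpha_i)_i.$$ Then $\lambda$ is a bounded representation, $0\to c_0\to c_0\oplus\mathbb R\to\mathbb R\to0$ is an exact sequence of $G$-spaces which splits as a sequence of Banach spaces but does not $G$-split. Consequently $\mathrm{Ext}(\mathbb R,c_0)=\{0\}$ while $\mathrm{Ext}_G(\mathbb R,c_0)\neq\{0\}$.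
   Context: $(e_i)$ is the unit vector basis of $c_0$. An exact sequence of $G$-spaces has $G$-equivariant bounded arrows. It $G$-splits if the quotient map admits a bounded linear $G$-equivariant right inverse (equivalently, the sequence is equivalent via a $G$-equivariant isomorphism to the direct sum with diagonal action). $\mathrm{Ext}(Y,X)$ is the set of equivalence classes of exact sequences $0\to X\to Z\to Y\to0$ of Banach spaces; $\mathrm{Ext}_G(Y,X)$ is the set of classes of exact sequences of $G$-spaces (with the given actions on $X$ and $Y$) under $G$-equivariant equivalence; $0$ denotes the class of split (resp. $G$-split) sequences. *)

(* Defs.v *)
From Stdlib Require Import Reals Lra.
Open Scope R_scope.

Definition c0 (x : nat -> R) : Prop := Un_cv x 0.

Definition sup_le (x : nat -> R) (M : R) : Prop := forall n, Rabs (x n) <= M.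

(* An element g of G = {-1,1}^N eventually 1 is encoded as g : nat -> bool,
   with [g i = true] meaning alpha_i = -1; it must be eventually [false]. *)
Definition inG (g : nat -> bool) : Prop :=
  exists N, forall n, (N <= n)%nat -> g n = false.

(* coordinatewise multiplication of +-1 sequences = xor of the encodings *)
Definition Gmul (g h : nat -> bool) : nat -> bool := fun n => xorb (g n) (h n).
Definition Gunit : nat -> bool := fun _ => false.

Definition sgn (b : bool) : R := if b then -1 else 1.

Definition u_act (g : nat -> bool) (x : nat -> R) : nat -> R :=
  fun n => sgn (g n) * x n.

Definition lam (g : nat -> bool) (z : (nat -> R) * R) : (nat -> R) * R :=
  (fun n => sgn (g n) * fst z n + (if g n then snd z else 0), snd z).

Definition incl (x : nat -> R) : (nat -> R) * R := (x, 0).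
Definition quot (z : (nat -> R) * R) : R := snd z.

Definition pair_le (z : (nat -> R) * R) (M : R) : Prop :=
  sup_le (fst z) M /\ Rabs (snd z) <= M.

Definition in_c0R (z : (nat -> R) * R) : Prop := c0 (fst z).

Definition peq (z w : (nat -> R) * R) : Prop :=
  (forall n, fst z n = fst w n) /\ snd z = snd w.

Definition linear_c0R (T : (nat -> R) * R -> (nat -> R) * R) : Prop :=
  forall a b z w, in_c0R z -> in_c0R w ->
    peq (T ((fun n => a * fst z n + b * fst w n), a * snd z + b * snd w))
        ((fun n => a * fst (T z) n + b * fst (T w) n), a * snd (T z) + b * snd (T w)).

Definition bounded_c0R (T : (nat -> R) * R -> (nat -> R) * R) (C : R) : Prop :=
  forall z M, in_c0R z -> pair_le z M -> pair_le (T z) (C * M).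

Definition bdd_linear_from_R (s : R -> (nat -> R) * R) : Prop :=
  (forall y, in_c0R (s y)) /\
  (forall a b y y', peq (s (a * y + b * y'))
       ((fun n => a * fst (s y) n + b * fst (s y') n), a * snd (s y) + b * snd (s y'))) /\
  (exists C, forall y, pair_le (s y) (C * Rabs y)).

Record BanachSpace := {
  bs_car :> Type;
  bs_zero : bs_car;
  bs_add : bs_car -> bs_car -> bs_car;
  bs_opp : bs_car -> bs_car;
  bs_scal : R -> bs_car -> bs_car;
  bs_norm : bs_car -> R;
  bs_addA : forall x y z, bs_add x (bs_add y z) = bs_add (bs_add x y) z;
  bs_addC : forall x y, bs_add x y = bs_add y x;
  bs_add0 : forall x, bs_add x bs_zero = x;
  bs_addN : forall x, bs_add x (bs_opp x) = bs_zero;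
  bs_scalA : forall a b x, bs_scal a (bs_scal b x) = bs_scal (a * b) x;
  bs_scal1 : forall x, bs_scal 1 x = x;
  bs_scalDr : forall a x y, bs_scal a (bs_add x y) = bs_add (bs_scal a x) (bs_scal a y);
  bs_scalDl : forall a b x, bs_scal (a + b) x = bs_add (bs_scal a x) (bs_scal b x);
  bs_norm_ge0 : forall x, 0 <= bs_norm x;
  bs_norm_eq0 : forall x, bs_norm x = 0 -> x = bs_zero;
  bs_normZ : forall a x, bs_norm (bs_scal a x) = Rabs a * bs_norm x;
  bs_normD : forall x y, bs_norm (bs_add x y) <= bs_norm x + bs_norm y;
  bs_complete : forall u : nat -> bs_car,
    (forall eps, 0 < eps -> exists N, forall m n, (N <= m)%nat -> (N <= n)%nat ->
        bs_norm (bs_add (u m) (bs_opp (u n))) < eps) ->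
    exists l, forall eps, 0 < eps -> exists N, forall n, (N <= n)%nat ->
        bs_norm (bs_add (u n) (bs_opp l)) < eps
}.

Definition Ext_R_c0_trivial : Prop :=
  forall (Z : BanachSpace) (j : (nat -> R) -> Z) (q : Z -> R),
    (forall a b x x', c0 x -> c0 x' ->
       j (fun n => a * x n + b * x' n) = bs_add Z (bs_scal Z a (j x)) (bs_scal Z b (j x'))) ->
    (exists C, forall x M, c0 x -> sup_le x M -> bs_norm Z (j x) <= C * M) ->
    (forall a b z z', q (bs_add Z (bs_scal Z a z) (bs_scal Z b z')) = a * q z + b * q z') ->
    (exists C, forall z, Rabs (q z) <= C * bs_norm Z z) ->
    (forall x x', c0 x -> c0 x' -> j x = j x' -> forall n, x n = x' n) ->
    (forall y, exists z, q z = y) ->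
    (forall z, q z = 0 <-> exists x, c0 x /\ j x = z) ->
    exists s : R -> Z,
      (forall a b y y', s (a * y + b * y') = bs_add Z (bs_scal Z a (s y)) (bs_scal Z b (s y'))) /\
      (exists C, forall y, bs_norm Z (s y) <= C * Rabs y) /\
      (forall y, q (s y) = y).

(* Main.v *)
Require Import Defs.
From Stdlib Require Import Reals.
Open Scope R_scope.

From Stdlib Require Import Lra Lia.
Lemma sgn_abs b : Rabs (sgn b) = 1.
Proof. destruct b; simpl; [rewrite Rabs_left; lra|rewrite Rabs_R1; reflexivity]. Qed.

Theorem mainTheorem18 :
  (* u is a bounded representation of G on c0 (isometric) *)
  (forall g, inG g -> forall x, c0 x -> c0 (u_act g x)) /\
  (* lambda is a bounded representation of G on c0 (+) R *)
  (forall g, inG g -> forall z, in_c0R z -> in_c0R (lam g z)) /\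
  (forall g, inG g -> linear_c0R (lam g)) /\
  (exists C, forall g, inG g -> bounded_c0R (lam g) C) /\
  (forall z, peq (lam Gunit z) z) /\
  (forall g h, inG g -> inG h -> forall z,
      peq (lam (Gmul g h) z) (lam g (lam h z))) /\
  (* 0 -> c0 -> c0 (+) R -> R -> 0 is an exact sequence of G-spaces *)
  (forall g, inG g -> forall x, peq (lam g (incl x)) (incl (u_act g x))) /\
  (forall g, inG g -> forall z, quot (lam g z) = quot z) /\
  (forall x x', incl x = incl x' -> x = x') /\
  (forall y, exists z, in_c0R z /\ quot z = y) /\
  (forall z, in_c0R z -> (quot z = 0 <-> exists x, c0 x /\ peq (incl x) z)) /\
  (* it splits as a sequence of Banach spaces *)
  (exists s : R -> (nat -> R) * R, bdd_linear_from_R s /\ forall y, quot (s y) = y) /\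
  (* but does not G-split *)
  ~ (exists s : R -> (nat -> R) * R, bdd_linear_from_R s /\ (forall y, quot (s y) = y) /\
       forall g, inG g -> forall y, peq (lam g (s y)) (s y)) /\
  (* consequently Ext(R, c0) = {0} (Ext_G(R, c0) <> {0} is witnessed by the
     non-G-split sequence above) *)
  Ext_R_c0_trivial.
Proof.
split.
{ intros g _ x Hx eps He. destruct (Hx eps He) as [N HN]. exists N. intros n Hn.
  specialize (HN n Hn). unfold R_dist, u_act in *. rewrite Rminus_0_r in *.
  rewrite Rabs_mult, sgn_abs. lra. }
split.
{ intros g [N0 HN0] [x y] Hx eps He. destruct (Hx eps He) as [N HN]. exists (max N N0).
  intros n Hn. specialize (HN n ltac:(lia)). unfold in_c0R, lam; simpl. rewrite (HN0 n ltac:(lia)).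
  unfold R_dist in *. simpl in *. rewrite Rminus_0_r in *. rewrite Rplus_0_r.
  simpl. rewrite Rmult_1_l. lra. }
split.
{ intros g _ a b z w _ _. split; simpl; [intro n; destruct (g n); simpl; ring|ring]. }
split.
{ exists 2. intros g _ [x y] M _ [H1 H2]. simpl in *. split; simpl.
  - intro n. specialize (H1 n). eapply Rle_trans; [apply Rabs_triang|].
    rewrite Rabs_mult, sgn_abs. pose proof (Rabs_pos y). destruct (g n); [|rewrite Rabs_R0]; lra.
  - pose proof (Rabs_pos y). lra. }
split.
{ intros [x y]. split; simpl; [intro n; ring|reflexivity]. }
split.
{ intros g h _ _ [x y]. split; simpl; [|reflexivity]. intro n. unfold Gmul, sgn.
  destruct (g n), (h n); simpl; ring. }
split.
{ intros g _ x. unfold lam, incl, u_act; split; simpl; [intro n; destruct (g n); ring|reflexivity]. }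
split. { reflexivity. }
split. { intros x x' H. exact (f_equal fst H). }
split.
{ intro y. exists (fun _ => 0, y). split; [|reflexivity].
  intros eps He. exists 0%nat. intros. unfold R_dist. simpl. rewrite Rminus_0_r, Rabs_R0. lra. }
split.
{ intros [x y] Hx. unfold quot, in_c0R in *; simpl in *. split.
  - intro Hy. exists x. split; [exact Hx|]. split; simpl; auto.
  - intros [x' [_ [_ H]]]. simpl in H. auto. }
split.
{ exists (fun y => (fun _ => 0, y)). split; [|reflexivity]. split; [|split].
  - intros y eps He. exists 0%nat. intros. unfold R_dist. simpl. rewrite Rminus_0_r, Rabs_R0. lra.
  - intros. split; simpl; [intro; ring|ring].
  - exists 1. intro y. split; simpl; [intro; rewrite Rabs_R0|]; pose proof (Rabs_pos y); lra. }
split.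
{ intros [s [[Hc _] [Hq Hg]]].
  assert (Hhalf : forall n, fst (s 1) n = /2).
  { intro n. set (g := fun k => Nat.eqb k n).
    assert (Ig : inG g). { exists (S n). intros k Hk. unfold g. apply Nat.eqb_neq. lia. }
    destruct (Hg g Ig 1) as [H1 _]. specialize (H1 n). simpl in H1.
    unfold g in H1. rewrite Nat.eqb_refl in H1. simpl in H1.
    specialize (Hq 1). unfold quot in Hq. rewrite Hq in H1. lra. }
  destruct (Hc 1 (/4) ltac:(lra)) as [N HN]. specialize (HN N (le_n _)).
  unfold R_dist in HN. rewrite Hhalf, Rminus_0_r, Rabs_right in HN; lra. }
intros Z j q _ _ Hql _ _ Hsurj _.
destruct (Hsurj 1) as [z0 Hz0].
exists (fun y => bs_scal Z y z0). split; [|split].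
- intros a b y y'. rewrite !bs_scalA, bs_scalDl. reflexivity.
- exists (bs_norm Z z0). intro y. rewrite bs_normZ. lra.
- intro y. replace (bs_scal Z y z0) with (bs_add Z (bs_scal Z y z0) (bs_scal Z 0 z0)).
  + rewrite Hql, Hz0. ring.
  + rewrite <- bs_scalDl, Rplus_0_r. reflexivity.
Qed.
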